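(* Let $\mathcal{X}=\{\mathbf{x}_1,\dots,\mathbf{x}_N\}\subset\mathbb{R}^d$, and for weights $\pi=(\pi_1,\dots,\pi_N)$ with $\pi_j>0$, $\sum_j\pi_j=1$, and bandwidths $\sigma\in(0,\infty)^N$ consider the $\pi$-KDE model $p_{\pi\text{-KDE}}(\mathbf{x};\pi,\sigma)=\sum_j\pi_j\mathcal{N}(\mathbf{x};\mathbf{x}_j,\sigma_j^2\mathbf{I})$, with total log-likelihood $L(\pi,\sigma)=\sum_i\log p_{\pi\text{-KDE}}(\mathbf{x}_i;\pi,\sigma)$ and leave-one-out total log-likelihood $L_{\text{LOO}}(\pi,\sigma)=\sum_i\log\sum_{j\ne i}\pi_j\mathcal{N}(\mathbf{x}_i;\mathbf{x}_j,\sigma_j^2\mathbf{I})$. Then: (i) For any index $j'$ and any fixed $\pi$ and fixed $\sigma_j>0$ ($j\ne j'$), $L(\pi,\sigma)\to+\infty$ as $\sigma_{j'}\to0^+$; conversely, if $\sigma_j\ge\varepsilon>0$ for all $j$ then $L(\pi,\sigma)$ is bounded above by a constant depending only on $N,d,\varepsilon$ (uniformly in $\pi$), so $L(\pi^{(n)},\sigma^{(n)})\to+\infty$ forces $\min_j\sigma^{(n)}_j\to0$. (ii) If $N\ge2$ and the points of $\mathcal{X}$ are pairwise distinct, then $L_{\text{LOO}}$ is bounded above on the set of all admissible $(\pi,\sigma)$. (iii) If $N\ge2$ and the points of $\mathcal{X}$ are pairwise distinct, there exists $\varepsilon>0$ depending only on the dataset such that every maximizer $(\pi^*,\sigma^*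 )$ of $L_{\text{LOO}}$ over admissible $(\pi,\sigma)$ satisfies $\sigma^*_j\ge\varepsilon$ for all $j$ (no data-copying).
   Context: $\mathcal{N}(\mathbf{x};\boldsymbol\mu,\sigma^2\mathbf{I})=(2\pi\sigma^2)^{-d/2}\exp\!\big(-\lVert\mathbf{x}-\boldsymbol\mu\rVert^2/(2\sigma^2)\big)$ denotes the isotropic Gaussian density on $\mathbb{R}^d$. The $\pi$-KDE model is a Gaussian mixture with fixed centres at the data points, individual positive weights $\pi_j$ summing to one, and individual bandwidths $\sigma_j$; the adaptive KDE is the special case $\pi_j=1/N$. ''Data-copying'' means that some bandwidth $\sigma_j\to0^+$. *)

(* Defs.v *)
From HB Require Import structures.
From mathcomp Require Import all_boot all_order all_algebra.
From mathcomp Require Import all_classical all_reals all_analysis.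
Set Implicit Arguments. Unset Strict Implicit. Unset Printing Implicit Defensive.
Import Order.TTheory GRing.Theory Num.Theory.
Import numFieldNormedType.Exports.
Local Open Scope ring_scope.

(* squared Euclidean norm of a point of R^d (a row vector) *)
Definition sqnorm {R : realType} {d : nat} (v : 'rV[R]_d) : R :=
  \sum_(k < d) (v ord0 k) ^+ 2.

Definition gauss {R : realType} {d : nat} (x mu : 'rV[R]_d) (s : R) : R :=
  (2 * pi * s ^+ 2) `^ (- (d%:R / 2)) * expR (- sqnorm (x - mu) / (2 * s ^+ 2)).

Definition adm_weights {R : realType} {N : nat} (w : 'I_N -> R) : Prop :=
  (forall j, 0 < w j) /\ \sum_(j < N) w j = 1.

Definition adm_bw {R : realType} {N : nat} (s : 'I_N -> R) : Prop :=
  forall j, 0 < s j.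

Definition pkde {R : realType} {d N : nat} (X : 'I_N -> 'rV[R]_d)
  (w s : 'I_N -> R) (x : 'rV[R]_d) : R :=
  \sum_(j < N) w j * gauss x (X j) (s j).

Definition loglik {R : realType} {d N : nat} (X : 'I_N -> 'rV[R]_d)
  (w s : 'I_N -> R) : R :=
  \sum_(i < N) ln (pkde X w s (X i)).

Definition loglik_loo {R : realType} {d N : nat} (X : 'I_N -> 'rV[R]_d)
  (w s : 'I_N -> R) : R :=
  \sum_(i < N) ln (\sum_(j < N | j != i) w j * gauss (X i) (X j) (s j)).

Definition set_bw {R : realType} {N : nat} (s : 'I_N -> R) (j' : 'I_N) (t : R)
  : 'I_N -> R := fun j => if j == j' then t else s j.

(* Main.v *)
Require Import Defs.
From HB Require Import structures.
From mathcomp Require Import all_boot all_order all_algebra.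
From mathcomp Require Import all_classical all_reals all_analysis.
From mathcomp Require Import ring lra.
Import Order.TTheory GRing.Theory Num.Theory.
Import numFieldNormedType.Exports.
Local Open Scope classical_set_scope.
Local Open Scope ring_scope.


Section Helpers.
Variable R : realType.
Variable d : nat.
Hypothesis hd : (0 < d)%N.

Lemma dpos : 0 < d%:R :> R. Proof. by rewrite ltr0n. Qed.

Lemma sqnorm_ge0 (v : 'rV[R]_d) : 0 <= sqnorm v.
Proof. by apply: sumr_ge0 => k _; rewrite sqr_ge0. Qed.

Lemma sqnorm_gt0 (v : 'rV[R]_d) : v != 0 -> 0 < sqnorm v.
Proof.
move=> hv; rewrite lt_neqAle sqnorm_ge0 andbT; apply/negP => /eqP h.
move/negP: hv; apply; apply/eqP/rowP => k.
have h2 := psumr_eq0P (fun (i : 'I_d) (_ : true) => sqr_ge0 (v ord0 i)) (esym h).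
by have := h2 k isT; rewrite mxE => /eqP; rewrite sqrf_eq0 => /eqP ->.
Qed.

Lemma sqnorm0 : sqnorm (0 : 'rV[R]_d) = 0.
Proof. by rewrite /sqnorm big1 // => k _; rewrite mxE expr0n. Qed.

Lemma ln_le_sub1 (y : R) : 0 < y -> ln y <= y - 1.
Proof. move=> y0; have := @le_ln1Dx R (y - 1); rewrite addrCA subrr addr0; apply; lra. Qed.

Lemma ln_le_pos (x M : R) : 0 <= M -> x <= M -> ln x <= M.
Proof.
move=> M0 xM; have [x0|x0] := leP x 0; first by rewrite ln0.
exact: le_trans (ltW (ln_sublinear x0)) xM.
Qed.

Lemma gaussE (x mu : 'rV[R]_d) (s : R) : 0 < s ->
  gauss x mu s = expR (- (d%:R / 2) * ln (2 * pi * s ^+ 2) - sqnorm (x - mu) / (2 * s ^+ 2)).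
Proof.
move=> s0; rewrite /gauss /powR.
have -> : (2 * pi * s ^+ 2 == 0) = false.
  by apply/negbTE; rewrite gt_eqF // mulr_gt0 ?exprn_gt0 // mulr_gt0 ?pi_gt0.
by rewrite -expRD (mulNr (sqnorm _)).
Qed.

Lemma gauss_ge0 (x mu : 'rV[R]_d) (s : R) : 0 <= gauss x mu s.
Proof. by rewrite /gauss mulr_ge0 ?powR_ge0 ?expR_ge0. Qed.

Lemma gauss_gt0 (x mu : 'rV[R]_d) (s : R) : 0 < s -> 0 < gauss x mu s.
Proof. by move=> s0; rewrite gaussE // expR_gt0. Qed.

Lemma ln_gauss_self (x : 'rV[R]_d) (s : R) : 0 < s ->
  ln (gauss x x s) = - (d%:R / 2) * ln (2 * pi * s ^+ 2).
Proof. by move=> s0; rewrite gaussE // expRK subrr sqnorm0 mul0r subr0. Qed.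


Lemma pi2_gt0 : 0 < 2 * pi :> R. Proof. by rewrite mulr_gt0 ?pi_gt0. Qed.

Lemma pos2pi (t : R) : 0 < t -> 2 * pi * t \in Num.pos.
Proof. by move=> t0; rewrite posrE mulr_gt0 ?pi2_gt0. Qed.

Lemma gauss_le_eps (x mu : 'rV[R]_d) (s eps : R) : 0 < eps -> eps <= s ->
  gauss x mu s <= expR (- (d%:R / 2) * ln (2 * pi * eps ^+ 2)).
Proof.
move=> e0 es; have s0 : 0 < s by exact: lt_le_trans es.
rewrite gaussE // ler_expR.
have h1 : ln (2 * pi * eps ^+ 2) <= ln (2 * pi * s ^+ 2).
  rewrite ler_ln ?pos2pi ?exprn_gt0 //.
  by rewrite ler_pM2l ?pi2_gt0 // ler_pXn2r // ?nnegrE ltW.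
have h2 : 0 <= sqnorm (x - mu) / (2 * s ^+ 2).
  by rewrite divr_ge0 ?sqnorm_ge0 // ltW // mulr_gt0 ?exprn_gt0.
have h3 : 0 <= d%:R / 2 :> R by rewrite divr_ge0 ?ler0n.
have := ler_wpM2l h3 h1; lra.
Qed.

Definition Kb (D : R) : R := expR (- (d%:R / 2) * (ln (2 * pi * D / d%:R) + 1)).

Lemma Kb_ge0 D : 0 <= Kb D. Proof. exact: expR_ge0. Qed.

Lemma gauss_le_D (x mu : 'rV[R]_d) (s : R) : 0 < s -> x != mu ->
  gauss x mu s <= Kb (sqnorm (x - mu)).
Proof.
move=> s0 hxm; set D := sqnorm (x - mu).
have D0 : 0 < D by rewrite /D sqnorm_gt0 // subr_eq0.
have d0 := dpos.
rewrite gaussE // /Kb ler_expR -/D.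
set k := d%:R / D.
have k0 : 0 < k by rewrite divr_gt0.
have ks0 : 0 < k * s ^+ 2 by rewrite mulr_gt0 ?exprn_gt0.
have hsp : ln (2 * pi * s ^+ 2) = ln (2 * pi * D / d%:R) + ln (k * s ^+ 2).
  rewrite -lnM; last 2 first.
  - by rewrite posrE divr_gt0 // mulr_gt0 ?pi2_gt0.
  - by rewrite posrE.
  congr ln; rewrite /k; field; rewrite ?pnatr_eq0 -?lt0n ?hd // gt_eqF //.
have hb : 1 - (k * s ^+ 2)^-1 <= ln (k * s ^+ 2).
  have kv : 0 < (k * s ^+ 2)^-1 by rewrite invr_gt0.
  have := ln_le_sub1 _ kv; rewrite lnV ?posrE //; lra.
have hq : sqnorm (x - mu) / (2 * s ^+ 2) = (d%:R / 2) * (k * s ^+ 2)^-1.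
  rewrite -/D /k; field.
  by rewrite !gt_eqF.
rewrite hq hsp.
have h3 : 0 <= d%:R / 2 :> R by rewrite divr_ge0 ?ler0n.
have := ler_wpM2l h3 hb; rewrite mulrBr mulr1.
set A := ln (2 * pi * D / d%:R); set B := ln (k * s ^+ 2).
move=> h; rewrite !mulrDr !mulNr; lra.
Qed.

Lemma gauss_lt (x mu : 'rV[R]_d) (s e : R) : 0 < s -> s < e ->
  d%:R * e ^+ 2 < sqnorm (x - mu) -> gauss x mu s < gauss x mu e.
Proof.
move=> s0 se hD; have e0 : 0 < e by exact: lt_trans se.
set D := sqnorm (x - mu) in hD *.
rewrite !gaussE // ltr_expR -/D.
set r := e ^+ 2 / s ^+ 2.
have s20 : 0 < s ^+ 2 by rewrite exprn_gt0.
have e20 : 0 < e ^+ 2 by rewrite exprn_gt0.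
have r0 : 0 < r by rewrite divr_gt0.
have hsplit : ln (2 * pi * e ^+ 2) = ln (2 * pi * s ^+ 2) + ln r.
  rewrite -lnM; last 2 first.
  - by rewrite pos2pi.
  - by rewrite posrE.
  by congr ln; rewrite /r; field; rewrite gt_eqF.
rewrite hsplit.
have hr := ln_le_sub1 _ r0.
have h3 : 0 <= d%:R / 2 :> R by rewrite divr_ge0 ?ler0n.
have h4 := ler_wpM2l h3 hr.
suff : d%:R / 2 * (r - 1) < D / (2 * s ^+ 2) - D / (2 * e ^+ 2).
  move: h4; set L := ln (2 * pi * s ^+ 2); set lr := ln r; set dd := d%:R / 2.
  rewrite !mulrDr !mulNr mulrN1; lra.
rewrite -subr_gt0.
rewrite -subr_gt0.
have -> : D / (2 * s ^+ 2) - D / (2 * e ^+ 2) - d%:R / 2 * (r - 1) =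
   (e ^+ 2 - s ^+ 2) * (D - d%:R * e ^+ 2) / (2 * s ^+ 2 * e ^+ 2).
  by rewrite /r; field; apply/andP; split; rewrite gt_eqF.
rewrite subr0 divr_gt0 ?mulr_gt0 ?subr_gt0 //.
by rewrite ltr_pXn2r // ?nnegrE ltW.
Qed.


Lemma sum_ge_term (I : finType) (P : pred I) (F : I -> R) (i0 : I) :
  (forall i, P i -> 0 <= F i) -> P i0 -> F i0 <= \sum_(i | P i) F i.
Proof.
move=> hF hP; rewrite (bigD1 i0) //= lerDl sumr_ge0 // => i /andP[hi _].
exact: hF.
Qed.

Lemma partIb (N : nat) (eps : R) : 0 < eps ->
  exists C : R, forall (X : 'I_N -> 'rV[R]_d) (w s : 'I_N -> R),
    adm_weights w -> adm_bw s -> (forall j, eps <= s j) -> loglik X w s <= C.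
Proof.
move=> e0; set M := expR (- (d%:R / 2) * ln (2 * pi * eps ^+ 2)).
exists (M *+ N) => X w s [w0 w1] s0 se.
have -> : M *+ N = \sum_(i < N) M by rewrite sumr_const card_ord.
apply: ler_sum => i _; apply: ln_le_pos; first exact: expR_ge0.
rewrite /pkde; apply: (@le_trans _ _ (\sum_(j < N) w j * M)).
  apply: ler_sum => j _; apply: ler_wpM2l; [exact: ltW | exact: gauss_le_eps e0 (se j)].
by rewrite -mulr_suml w1 mul1r.
Qed.

Lemma partIc (N : nat) (X : 'I_N -> 'rV[R]_d) (w s : nat -> 'I_N -> R) :
  (forall n, adm_weights (w n)) -> (forall n, adm_bw (s n)) ->
  (fun n => loglik X (w n) (s n)) @ \oo --> +oo ->
  forall e : R, 0 < e -> \forall n \near \oo, exists j, s n j < e.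
Proof.
move=> hw hs hL e e0; have [C hC] := partIb N e e0.
apply: filterS (cvgry_ge hL (C + 1)) => n hn.
case: (pselect (exists j, s n j < e)) => // hno; exfalso.
have : loglik X (w n) (s n) <= C.
  apply: hC => // j; rewrite leNgt; apply/negP => hj; apply: hno; by exists j.
move: hn; lra.
Qed.

Lemma partII (N : nat) (X : 'I_N -> 'rV[R]_d) : (2 <= N)%N -> injective X ->
  exists C : R, forall w s : 'I_N -> R,
    adm_weights w -> adm_bw s -> loglik_loo X w s <= C.
Proof.
move=> hN hX.
set K := \sum_(i < N) \sum_(j < N | j != i) Kb (sqnorm (X i - X j)).
have K0 : 0 <= K by apply: sumr_ge0 => i _; apply: sumr_ge0 => j _; exact: Kb_ge0.
exists (K *+ N) => w s [w0 w1] s0.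
have -> : K *+ N = \sum_(i < N) K by rewrite sumr_const card_ord.
apply: ler_sum => i _; apply: ln_le_pos => //.
apply: (@le_trans _ _ (\sum_(j < N | j != i) w j * K)).
  apply: ler_sum => j hji; apply: ler_wpM2l; first exact: ltW.
  apply: le_trans (gauss_le_D (X i) (X j) (s j) (s0 j) _) _.
    by apply/eqP => /hX /eqP; rewrite eq_sym (negbTE hji).
  apply: le_trans (@sum_ge_term _ (fun j : 'I_N => j != i) (fun j => Kb (sqnorm (X i - X j))) j _ hji) _.
    by move=> k _; exact: Kb_ge0.
  apply: (@sum_ge_term _ xpredT (fun i => \sum_(j < N | j != i) Kb (sqnorm (X i - X j))) i) => // k _.
  by apply: sumr_ge0 => l _; exact: Kb_ge0.
apply: (@le_trans _ _ (\sum_(j < N) w j * K)).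
  rewrite [Y in _ <= Y](bigD1 i) //= lerDr; exact: mulr_ge0 (ltW (w0 i)) K0.
by rewrite -mulr_suml w1 mul1r.
Qed.


Lemma partIII (N : nat) (X : 'I_N -> 'rV[R]_d) : (2 <= N)%N -> injective X ->
  exists eps : R, 0 < eps /\
    forall ws ss : 'I_N -> R, adm_weights ws -> adm_bw ss ->
      (forall w s : 'I_N -> R, adm_weights w -> adm_bw s ->
         loglik_loo X w s <= loglik_loo X ws ss) ->
      forall j, eps <= ss j.
Proof.
move=> hN hX.
have hD0 : forall i j, j != i -> 0 < sqnorm (X i - X j).
  move=> i j hji; rewrite sqnorm_gt0 // subr_eq0.
  by apply/eqP => /hX /eqP; rewrite eq_sym (negbTE hji).
set S := \sum_(i < N) \sum_(j < N | j != i) (sqnorm (X i - X j))^-1.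
have S0 : 0 <= S.
  apply: sumr_ge0 => i _; apply: sumr_ge0 => j hji; rewrite invr_ge0 ltW //; exact: hD0.
have d0 := dpos.
have dSp := mulr_ge0 (ltW d0) S0.
have dS0 : 0 < d%:R * S + 1 by lra.
set eps := (d%:R * S + 1)^-1.
have e0 : 0 < eps by rewrite invr_gt0.
have e1 : eps <= 1 by rewrite invf_le1 //; lra.
have hDe : forall i j, j != i -> d%:R * eps ^+ 2 < sqnorm (X i - X j).
  move=> i j hji; have Dp := hD0 i j hji; set D := sqnorm (X i - X j) in Dp *.
  have hSD : D^-1 <= S.
    apply: le_trans (@sum_ge_term _ (fun j : 'I_N => j != i) (fun j => (sqnorm (X i - X j))^-1) j _ hji) _.
      by move=> k hk; rewrite invr_ge0 ltW //; exact: hD0.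
    apply: (@sum_ge_term _ xpredT (fun i => \sum_(j < N | j != i) (sqnorm (X i - X j))^-1) i) => // k _.
    by apply: sumr_ge0 => l hl; rewrite invr_ge0 ltW //; exact: hD0.
  have hDS : 1 <= D * S.
    by have := ler_wpM2l (ltW Dp) hSD; rewrite mulfV ?gt_eqF.
  have he2 : eps ^+ 2 <= eps.
    by rewrite expr2 -[Y in _ <= Y]mulr1; apply: ler_wpM2l => //; exact: ltW.
  apply: (@le_lt_trans _ _ (d%:R * eps)); first by apply: ler_wpM2l => //; exact: ltW.
  rewrite /eps -[d%:R * _]/(d%:R / _) ltr_pdivrMr //.
  have hh : 0 <= D * S - 1 by lra.
  have := mulr_ge0 (ltW d0) hh.
  nra.
exists eps; split => // ws ss hws hss hmax j.
rewrite leNgt; apply/negP => hj.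
set s' := set_bw ss j eps.
have hs' : adm_bw s'.
  by move=> k; rewrite /s' /set_bw; case: ifP => // _; exact: hss.
have := hmax ws s' hws hs'; apply/negP; rewrite -ltNge.
pose Si s i := \sum_(k < N | k != i) ws k * gauss (X i) (X k) (s k).
have hL : forall s, loglik_loo X ws s = \sum_(i < N) ln (Si s i) by [].
rewrite !hL.
have heq : Si s' j = Si ss j.
  by apply: eq_bigr => k hk; rewrite /s' /set_bw (negbTE hk).
have [ws0 _] := hws.
have hlt : forall i, i != j -> 0 < Si ss i /\ Si ss i < Si s' i.
  move=> i hij; have hji : j != i by rewrite eq_sym.
  split.
    apply: lt_le_trans (@sum_ge_term _ (fun k : 'I_N => k != i) (fun k => ws k * gauss (X i) (X k) (ss k)) j _ hji).
      by rewrite mulr_gt0 ?gauss_gt0.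
    by move=> k _; rewrite mulr_ge0 ?gauss_ge0 ?ltW.
  rewrite /Si (bigD1 j) //= [Y in _ < Y](bigD1 j) //=.
  have -> : \sum_(i0 < N | (i0 != i) && (i0 != j)) ws i0 * gauss (X i) (X i0) (s' i0)
          = \sum_(i0 < N | (i0 != i) && (i0 != j)) ws i0 * gauss (X i) (X i0) (ss i0).
    by apply: eq_bigr => k /andP[_ hk]; rewrite /s' /set_bw (negbTE hk).
  rewrite ltrD2r ltr_pM2l // /s' /set_bw eqxx.
  exact: gauss_lt (hss j) hj (hDe i j hji).
have hle : forall i, ln (Si ss i) <= ln (Si s' i).
  move=> i; have [->|hij] := eqVneq i j; first by rewrite heq.
  have [h1 h2] := hlt i hij.
  rewrite ler_ln; [exact: ltW | by rewrite posrE | by rewrite posrE (lt_trans h1)].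
have [i0 hi0] : exists i0 : 'I_N, i0 != j.
  have h0 : (0 < N)%N by apply: leq_trans hN.
  have h1 : (1 < N)%N by [].
  case: (eqVneq j (Ordinal h0)) => hj0.
    by exists (Ordinal h1); rewrite hj0; apply/eqP => /(congr1 val).
  by exists (Ordinal h0); rewrite eq_sym.
rewrite (bigD1 i0) //= [Y in _ < Y](bigD1 i0) //=.
apply: ltr_leD; last by apply: ler_sum => i _; exact: hle.
have [h1 h2] := hlt i0 hi0.
rewrite ltr_ln; [exact: h2 | by rewrite posrE | by rewrite posrE (lt_trans h1)].
Qed.


Lemma term_lb (N : nat) (X : 'I_N -> 'rV[R]_d) (w s : 'I_N -> R) (i : 'I_N) :
  (forall j, 0 < w j) -> adm_bw s ->
  ln (w i) - (d%:R / 2) * ln (2 * pi * s i ^+ 2) <= ln (pkde X w s (X i)).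
Proof.
move=> w0 s0.
have hg : 0 < w i * gauss (X i) (X i) (s i) by rewrite mulr_gt0 ?gauss_gt0.
have hp : w i * gauss (X i) (X i) (s i) <= pkde X w s (X i).
  apply: (@sum_ge_term _ xpredT (fun j => w j * gauss (X i) (X j) (s j)) i) => // k _.
  by rewrite mulr_ge0 ?gauss_ge0 // ltW.
have -> : ln (w i) - (d%:R / 2) * ln (2 * pi * s i ^+ 2) =
    ln (w i * gauss (X i) (X i) (s i)).
  rewrite [in RHS]lnM; [|by rewrite posrE w0|by rewrite posrE; apply: gauss_gt0].
  by rewrite ln_gauss_self // mulNr.
rewrite ler_ln; [exact: hp | by rewrite posrE | by rewrite posrE (lt_le_trans hg)].
Qed.

Lemma partIa (N : nat) (X : 'I_N -> 'rV[R]_d) (w s : 'I_N -> R) (j' : 'I_N) :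
  adm_weights w -> adm_bw s ->
  (fun t : R => loglik X w (set_bw s j' t)) @ 0^'+ --> +oo.
Proof.
move=> [w0 w1] hs; apply/cvgryPge => A.
set C0 := \sum_(i < N | i != j') (ln (w i) - (d%:R / 2) * ln (2 * pi * s i ^+ 2)).
have hlb : forall t, 0 < t ->
    ln (w j') - (d%:R / 2) * ln (2 * pi * t ^+ 2) + C0 <= loglik X w (set_bw s j' t).
  move=> t t0; have hs' : adm_bw (set_bw s j' t).
    by move=> k; rewrite /set_bw; case: ifP.
  rewrite /loglik (bigD1 j') //=; apply: lerD.
    by have := term_lb _ X _ _ j' w0 hs'; rewrite /set_bw eqxx.
  apply: ler_sum => i hi; have := term_lb _ X _ _ i w0 hs'.
  by rewrite /set_bw (negbTE hi).
set B := ln (w j') + C0 - (d%:R / 2) * ln (2 * pi).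
have d0 := dpos.
near=> t.
have t0 : 0 < t by near: t; exact: nbhs_right_gt.
have ht : ln t <= (B - A) / d%:R.
  near: t; have := (cvgrNyPle (fun x : R => ln x)).1 (@lnNy R) ((B - A) / d%:R); exact.
apply: le_trans (hlb t t0).
have -> : ln (2 * pi * t ^+ 2) = ln (2 * pi) + ln t *+ 2.
  rewrite lnM; [|by rewrite posrE pi2_gt0|by rewrite posrE exprn_gt0].
  by rewrite lnXn.
have dn0 : d%:R != 0 :> R by rewrite gt_eqF.
have := ler_wpM2l (ltW d0) ht; rewrite mulrCA divff // mulr1.
rewrite /B; set L := ln t; set P := ln (2 * pi).
have e : d%:R / 2 * (P + L *+ 2) = d%:R / 2 * P + d%:R * L.
  by rewrite mulr2n; field.
move=> h; rewrite e; lra.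
Unshelve. all: by end_near.
Qed.

End Helpers.

Theorem mainTheorem4 (R : realType) (d : nat) (hd : (0 < d)%N) :
  (* (i-a) L -> +oo as a single bandwidth sigma_{j'} -> 0+ *)
  (forall (N : nat) (X : 'I_N -> 'rV[R]_d) (w s : 'I_N -> R) (j' : 'I_N),
     adm_weights w -> adm_bw s ->
     (fun t : R => loglik X w (set_bw s j' t)) @ 0^'+ --> +oo) /\
  (* (i-b) uniform upper bound when all bandwidths are >= eps *)
  (forall (N : nat) (eps : R), 0 < eps ->
     exists C : R, forall (X : 'I_N -> 'rV[R]_d) (w s : 'I_N -> R),
       adm_weights w -> adm_bw s -> (forall j, eps <= s j) ->
       loglik X w s <= C) /\
  (* (i-c) divergence of L along a sequence forces min_j sigma_j -> 0 *)
  (forall (N : nat) (X : 'I_N -> 'rV[R]_d) (w s : nat -> 'I_N -> R),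
     (forall n, adm_weights (w n)) -> (forall n, adm_bw (s n)) ->
     (fun n => loglik X (w n) (s n)) @ \oo --> +oo ->
     forall e : R, 0 < e -> \forall n \near \oo, exists j, s n j < e) /\
  (* (ii) L_LOO is bounded above for distinct data, N >= 2 *)
  (forall (N : nat) (X : 'I_N -> 'rV[R]_d), (2 <= N)%N -> injective X ->
     exists C : R, forall w s : 'I_N -> R,
       adm_weights w -> adm_bw s -> loglik_loo X w s <= C) /\
  (* (iii) no data-copying for maximizers of L_LOO *)
  (forall (N : nat) (X : 'I_N -> 'rV[R]_d), (2 <= N)%N -> injective X ->
     exists eps : R, 0 < eps /\
       forall ws ss : 'I_N -> R, adm_weights ws -> adm_bw ss ->
         (forall w s : 'I_N -> R, adm_weights w -> adm_bw s ->
            loglik_loo X w s <= loglik_loo X ws ss) ->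
         forall j, eps <= ss j).
Proof.
Proof.
split; first exact: (@partIa R d hd).
split; first exact: (@partIb R d).
split; first exact: (@partIc R d).
split; first exact: (@partII R d hd).
exact: (@partIII R d hd).
Qed.
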